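(* Let $\Phi$ be a Følner sequence in $\mathbb{N}$ and let $j\mapsto f_j$ be a sequence in $L^2(\mathbb{N},\Phi)$ that is Cauchy with respect to $\|\cdot\|_\Phi$. Then there exist a subsequence $\Psi$ of $\Phi$ and $f\in L^2(\mathbb{N},\Psi)$ such that $\|f-f_j\|_\Psi\to0$ as $j\to\infty$. Moreover, if all the $f_j$ take values in an interval $[a,b]$, then so does $f$.
   Context: A Følner sequence in $\mathbb{N}$ is a sequence $\Phi\colon N\mapsto\Phi_N$ of finite non-empty subsets of $\mathbb{N}$ with $|(\Phi_N+m)\triangle\Phi_N|/|\Phi_N|\to0$ for all $m\in\mathbb{N}$. The Besicovitch seminorm is $\|f\|_\Phi=\big(\limsup_{N\to\infty}\frac{1}{|\Phi_N|}\sum_{n\in\Phi_N}|f(n)|^2\big)^{1/2}$ and $L^2(\mathbb{N},\Phi)=\{f\colon\mathbb{N}\to\mathbb{C}:\|f\|_\Phi<\infty\}$. A sequence $(f_j)$ is Cauchy with respect to $\|\cdot\|_\Phi$ if for every $\epsilon>0$ there is $N$ with $\|f_k-f_j\|_\Phi\le\epsilon$ for all $j,k\ge N$. *)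

(* Defs.v *)
From Stdlib Require Import Reals Lra List Arith.
From Coquelicot Require Import Coquelicot.
Open Scope R_scope.

(* Finite sets of naturals are represented by duplicate-free lists. *)
Definition memb (x : nat) (A : list nat) : bool := existsb (Nat.eqb x) A.

Definition shift_set (A : list nat) (m : nat) : list nat := map (fun x => (x + m)%nat) A.

Definition symdiff_card (A B : list nat) : nat :=
  (length (filter (fun x => negb (memb x B)) A) +
   length (filter (fun y => negb (memb y A)) B))%nat.

Definition finset_ok (A : list nat) : Prop := NoDup A /\ A <> nil.

Definition Folner (Phi : nat -> list nat) : Prop :=
  (forall N, finset_ok (Phi N)) /\
  forall m : nat,
    is_lim_seq (fun N => INR (symdiff_card (shift_set (Phi N) m) (Phi N))
                         / INR (length (Phi N))) 0.

Definition sum_list (s : list nat) (g : nat -> R) : R :=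
  fold_right (fun n acc => g n + acc) 0 s.

Definition bes_avg (Phi : nat -> list nat) (f : nat -> C) (N : nat) : R :=
  sum_list (Phi N) (fun n => (Cmod (f n))^2) / INR (length (Phi N)).

Definition besnorm (Phi : nat -> list nat) (f : nat -> C) : Rbar :=
  match LimSup_seq (bes_avg Phi f) with
  | Finite x => Finite (sqrt x)
  | p_infty => p_infty
  | m_infty => m_infty
  end.

Definition L2 (Phi : nat -> list nat) (f : nat -> C) : Prop :=
  Rbar_lt (besnorm Phi f) p_infty.

Definition fsub (f g : nat -> C) : nat -> C := fun n => Cminus (f n) (g n).

Definition Cauchy_bes (Phi : nat -> list nat) (fs : nat -> nat -> C) : Prop :=
  forall eps : R, 0 < eps -> exists N : nat, forall j k : nat,
    (N <= j)%nat -> (N <= k)%nat -> Rbar_le (besnorm Phi (fsub (fs k) (fs j))) eps.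

(* strictly increasing index map: Phi \o sigma is a subsequence of Phi *)
Definition strict_incr (sigma : nat -> nat) : Prop :=
  forall i j : nat, (i < j)%nat -> (sigma i < sigma j)%nat.

Definition in_interval (a b : R) (z : C) : Prop :=
  Im z = 0 /\ a <= Re z <= b.

(* Main.v *)
Require Import Defs.
From Stdlib Require Import Reals Lra Lia List Arith ClassicalEpsilon Classical.
From Coquelicot Require Import Coquelicot.
Open Scope R_scope.

Definition ev (P : nat -> Prop) := exists N0, forall N, (N0 <= N)%nat -> P N.

Lemma ev_and (P Q : nat -> Prop) : ev P -> ev Q -> ev (fun N => P N /\ Q N).
Proof.
  intros [a Ha] [b Hb]; exists (max a b); intros N HN; split;
  [apply Ha | apply Hb]; lia.
Qed.

Lemma ev_fin1 (K : nat) (P : nat -> nat -> Prop) :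
  (forall m, (m <= K)%nat -> ev (P m)) ->
  ev (fun N => forall m, (m <= K)%nat -> P m N).
Proof.
  induction K; intros H.
  - destruct (H 0%nat (le_n 0)) as [a Ha]. exists a; intros N HN m Hm.
    assert (m = 0%nat) by lia; subst; auto.
  - destruct (IHK (fun m Hm => H m (le_S _ _ Hm))) as [a Ha].
    destruct (H (S K) (le_n _)) as [b Hb].
    exists (max a b); intros N HN m Hm.
    destruct (Nat.eq_dec m (S K)) as [->|Hne].
    + apply Hb; lia.
    + apply Ha; lia.
Qed.

Lemma ev_imp (A : Prop) (P : nat -> Prop) : (A -> ev P) -> ev (fun N => A -> P N).
Proof.
  intros H; destruct (classic A) as [HA|HA].
  - destruct (H HA) as [a Ha]; exists a; auto.
  - exists 0%nat; intros; contradiction.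
Qed.

Lemma LimSup_eq (u : nat -> R) : is_LimSup_seq u (LimSup_seq u).
Proof.
  destruct (ex_LimSup_seq u) as [l Hl]. rewrite (is_LimSup_seq_unique _ _ Hl); exact Hl.
Qed.

Lemma normA (Phi : nat -> list nat) (g : nat -> C) (e d : R) :
  0 < e -> 0 < d -> Rbar_le (besnorm Phi g) e ->
  ev (fun N => bes_avg Phi g N < e ^ 2 + d).
Proof.
  intros He Hd H. unfold besnorm in H.
  pose proof (LimSup_eq (bes_avg Phi g)) as Hl.
  destruct (LimSup_seq (bes_avg Phi g)) as [r| |]; simpl in H, Hl.
  - destruct (Hl (mkposreal d Hd)) as [_ [N HN]]. exists N; intros n Hn.
    specialize (HN n Hn); simpl in HN.
    assert (r <= e ^ 2).
    { destruct (Rle_or_lt 0 r) as [Hr|Hr].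
      - pose proof (sqrt_sqrt r Hr). pose proof (sqrt_pos r). nra.
      - nra. }
    lra.
  - contradiction.
  - destruct (Hl (e ^ 2 + d)) as [N HN]; exists N; auto.
Qed.

Lemma normA' (Phi : nat -> list nat) (g : nat -> C) :
  L2 Phi g -> exists M, ev (fun N => bes_avg Phi g N < M).
Proof.
  intros H. unfold L2, besnorm in H.
  pose proof (LimSup_eq (bes_avg Phi g)) as Hl.
  destruct (LimSup_seq (bes_avg Phi g)) as [r| |]; simpl in H, Hl.
  - exists (r + 1). destruct (Hl (mkposreal 1 Rlt_0_1)) as [_ [N HN]].
    exists N; intros n Hn; apply (HN n Hn).
  - contradiction.
  - exists 0. destruct (Hl 0) as [N HN]; exists N; auto.
Qed.

Lemma normB (Phi : nat -> list nat) (g : nat -> C) (c : R) :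
  0 <= c -> ev (fun N => bes_avg Phi g N <= c ^ 2) ->
  Rbar_le (besnorm Phi g) c.
Proof.
  intros Hc [N0 HN0]. unfold besnorm.
  pose proof (LimSup_eq (bes_avg Phi g)) as Hl.
  destruct (LimSup_seq (bes_avg Phi g)) as [r| |]; simpl in Hl |- *.
  - assert (r <= c ^ 2).
    { destruct (Rle_or_lt r (c ^ 2)) as [h|h]; auto.
      assert (Hp : 0 < (r - c ^ 2) / 2) by lra.
      destruct (Hl (mkposreal _ Hp)) as [H1 _]. destruct (H1 N0) as [n [Hn Hn']].
      simpl in Hn'. specialize (HN0 n Hn). lra. }
    rewrite <- (sqrt_pow2 c Hc). apply sqrt_le_1_alt; auto.
  - destruct (Hl (c ^ 2) N0) as [n [Hn Hn']]. specialize (HN0 n Hn). lra.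
  - exact I.
Qed.

Lemma normC (Phi : nat -> list nat) (g : nat -> C) (M : R) :
  ev (fun N => bes_avg Phi g N <= M) -> L2 Phi g.
Proof.
  intros [N0 HN0]. unfold L2, besnorm.
  pose proof (LimSup_eq (bes_avg Phi g)) as Hl.
  destruct (LimSup_seq (bes_avg Phi g)) as [r| |]; simpl in Hl |- *; auto.
  destruct (Hl M N0) as [n [Hn Hn']]. specialize (HN0 n Hn). lra.
Qed.

Lemma sum_list_le (A : list nat) (g1 g2 : nat -> R) :
  (forall n, In n A -> g1 n <= g2 n) -> sum_list A g1 <= sum_list A g2.
Proof.
  induction A; simpl; intros H; [lra|].
  pose proof (H a (or_introl eq_refl)). assert (sum_list A g1 <= sum_list A g2) by auto. lra.
Qed.

Lemma sum_list_ext (A : list nat) (g1 g2 : nat -> R) :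
  (forall n, In n A -> g1 n = g2 n) -> sum_list A g1 = sum_list A g2.
Proof.
  induction A; simpl; intros H; auto.
  rewrite (H a (or_introl eq_refl)), IHA; auto.
Qed.

Lemma sum_list_plus (A : list nat) (g1 g2 : nat -> R) :
  sum_list A (fun n => g1 n + g2 n) = sum_list A g1 + sum_list A g2.
Proof. induction A; simpl; [lra|]. rewrite IHA; lra. Qed.

Lemma sum_list_scal (A : list nat) (c : R) (g : nat -> R) :
  sum_list A (fun n => c * g n) = c * sum_list A g.
Proof. induction A; simpl; [lra|]. rewrite IHA; lra. Qed.

Lemma sum_list_nonneg (A : list nat) (g : nat -> R) :
  (forall n, 0 <= g n) -> 0 <= sum_list A g.
Proof. intros H; induction A; simpl; [lra|]. specialize (H a); lra. Qed.

Lemma sum_list_app (A B : list nat) (g : nat -> R) :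
  sum_list (A ++ B) g = sum_list A g + sum_list B g.
Proof. induction A; simpl; [lra|]. rewrite IHA; lra. Qed.

Lemma sum_list_elem (A : list nat) (g : nat -> R) (a : nat) :
  (forall n, 0 <= g n) -> In a A -> g a <= sum_list A g.
Proof.
  intros H; induction A; simpl; [tauto|]. intros [->|Hi].
  - pose proof (sum_list_nonneg A g H); lra.
  - pose proof (H a0); specialize (IHA Hi); lra.
Qed.

Lemma memb_In x A : memb x A = true <-> In x A.
Proof.
  unfold memb; rewrite existsb_exists; split.
  - intros [y [Hy E]]; apply Nat.eqb_eq in E; subst; auto.
  - intros H; exists x; split; auto; apply Nat.eqb_refl.
Qed.

Lemma sum_remove_le (W : list nat) (w : nat -> R) a :
  (forall n, 0 <= w n) -> sum_list (remove Nat.eq_dec a W) w <= sum_list W w.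
Proof.
  intros H; induction W; simpl; [lra|].
  destruct (Nat.eq_dec a a0); simpl; pose proof (H a0); lra.
Qed.

Lemma sum_remove (W : list nat) (w : nat -> R) a :
  (forall n, 0 <= w n) -> In a W -> w a + sum_list (remove Nat.eq_dec a W) w <= sum_list W w.
Proof.
  intros H; induction W; simpl; [tauto|]. intros Hin.
  destruct (Nat.eq_dec a a0) as [<-|Hne]; simpl.
  - pose proof (sum_remove_le W w a H); lra.
  - destruct Hin as [->|Hin]; [congruence|]. specialize (IHW Hin); lra.
Qed.

Lemma sum_ind (A W : list nat) (w : nat -> R) :
  NoDup A -> (forall n, 0 <= w n) ->
  sum_list A (fun n => if memb n W then w n else 0) <= sum_list W w.
Proof.
  intros HA Hw; revert W; induction HA as [|a A Hna HA IH]; intros W; simpl.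
  - apply sum_list_nonneg; auto.
  - destruct (memb a W) eqn:E.
    + apply memb_In in E.
      rewrite (sum_list_ext A _ (fun n => if memb n (remove Nat.eq_dec a W) then w n else 0)).
      * pose proof (IH (remove Nat.eq_dec a W)). pose proof (sum_remove W w a Hw E). lra.
      * intros n Hn. assert (n <> a) by (intros ->; contradiction).
        destruct (memb n W) eqn:E1; destruct (memb n (remove Nat.eq_dec a W)) eqn:E2; auto.
        -- exfalso. apply memb_In in E1.
           assert (memb n (remove Nat.eq_dec a W) = true) by (apply memb_In; apply in_in_remove; auto).
           congruence.
        -- exfalso. apply memb_In in E2. apply in_remove in E2. destruct E2 as [E2 _].
           apply memb_In in E2. congruence.
    + pose proof (IH W); lra.
Qed.

Lemma max_in (A : list nat) : A <> nil -> In (fold_right max 0%nat A) A.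
Proof.
  induction A as [|a A IH]; [congruence|]. intros _. simpl.
  destruct A as [|b A'].
  - simpl. left. lia.
  - destruct (Nat.max_dec a (fold_right max 0%nat (b :: A'))) as [E|E]; rewrite E.
    + left; auto.
    + right; apply IH; congruence.
Qed.

Lemma max_ge (A : list nat) x : In x A -> (x <= fold_right max 0%nat A)%nat.
Proof.
  induction A; simpl; [tauto|]. intros [->|H]; [lia|]. specialize (IHA H); lia.
Qed.

Lemma symdiff_pos (A : list nat) : A <> nil -> (1 <= symdiff_card (shift_set A 1) A)%nat.
Proof.
  intros HA. set (M := fold_right max 0%nat A).
  assert (Hin : In (M + 1)%nat (filter (fun x => negb (memb x A)) (shift_set A 1))).
  { apply filter_In; split.
    - unfold shift_set. apply (in_map (fun x => (x + 1)%nat) A M). apply max_in; auto.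
    - destruct (memb (M + 1) A) eqn:E; auto. apply memb_In in E.
      apply max_ge in E. fold M in E. lia. }
  unfold symdiff_card.
  destruct (filter (fun x => negb (memb x A)) (shift_set A 1)); simpl in *; [tauto|lia].
Qed.

Lemma len_pos (A : list nat) : A <> nil -> 0 < INR (length A).
Proof. destruct A; [congruence|]. simpl length. intros _. apply lt_0_INR; lia. Qed.

Lemma folner_len (Phi : nat -> list nat) : Folner Phi ->
  forall C, ev (fun N => C <= INR (length (Phi N))).
Proof.
  intros [Hok Hlim] C. specialize (Hlim 1%nat). apply is_lim_seq_spec in Hlim.
  assert (Hp : 0 < / (Rmax C 0 + 1)).
  { apply Rinv_0_lt_compat. pose proof (Rmax_r C 0); lra. }
  destruct (Hlim (mkposreal _ Hp)) as [N0 HN0]. exists N0; intros N HN.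
  specialize (HN0 N HN); simpl in HN0.
  destruct (Hok N) as [_ Hne].
  pose proof (len_pos _ Hne) as Hl.
  pose proof (symdiff_pos _ Hne) as Hs. apply le_INR in Hs. simpl in Hs.
  set (L := INR (length (Phi N))) in *.
  set (S := INR (symdiff_card (shift_set (Phi N) 1) (Phi N))) in *.
  rewrite Rminus_0_r in HN0.
  assert (Hq : 0 <= S / L) by (apply Rdiv_le_0_compat; lra).
  rewrite Rabs_pos_eq in HN0 by lra.
  assert (1 / L <= S / L) by (unfold Rdiv; apply Rmult_le_compat_r; [left; apply Rinv_0_lt_compat|]; lra).
  assert (Hm : 0 < Rmax C 0 + 1) by (pose proof (Rmax_r C 0); lra).
  assert (1 / L < / (Rmax C 0 + 1)) by lra.
  assert (Rmax C 0 + 1 < L).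
  { apply Rinv_lt_cancel; [lra|]. unfold Rdiv in *; lra. }
  pose proof (Rmax_l C 0); lra.
Qed.

Definition Dn (fs : nat -> nat -> C) (k n : nat) : R :=
  sum_list (seq 0 (S k)) (fun i => sum_list (seq 0 (S k))
     (fun j => Cmod (Cminus (fs i n) (fs j n)) ^ 2)).

Definition Dk (fs : nat -> nat -> C) (k : nat) (W : list nat) : R :=
  sum_list W (Dn fs k).

Definition Jf (Phi : nat -> list nat) (fs : nat -> nat -> C) (m : nat) : nat :=
  epsilon (inhabits 0%nat) (fun J => forall j k, (J <= j)%nat -> (J <= k)%nat ->
     Rbar_le (besnorm Phi (fsub (fs k) (fs j))) (/ (INR m + 1))).

Definition goodN (Phi : nat -> list nat) (fs : nat -> nat -> C) (k : nat) (W : list nat)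
  (lb N : nat) : Prop :=
  (lb <= N)%nat /\ Dk fs k W * (INR k + 1) <= INR (length (Phi N)) /\
  forall m, (m <= k)%nat -> forall j, (j <= k)%nat -> (Jf Phi fs m <= j)%nat -> (Jf Phi fs m <= k)%nat ->
     bes_avg Phi (fsub (fs k) (fs j)) N < 2 * (/ (INR m + 1)) ^ 2.

Definition chooseN Phi fs k W lb : nat := epsilon (inhabits 0%nat) (goodN Phi fs k W lb).

Fixpoint st (Phi : nat -> list nat) (fs : nat -> nat -> C) (k : nat) : nat * list nat :=
  match k with
  | O => let N := chooseN Phi fs 0 nil 0 in (N, Phi N)
  | S k' => let N := chooseN Phi fs (S k') (snd (st Phi fs k')) (S (fst (st Phi fs k'))) in
            (N, snd (st Phi fs k') ++ Phi N)
  end.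

Definition sig Phi fs k := fst (st Phi fs k).
Definition Wof Phi fs k := match k with O => nil | S k' => snd (st Phi fs k') end.
Definition lbof Phi fs k := match k with O => O | S k' => S (sig Phi fs k') end.

Lemma Jf_spec Phi fs m : Cauchy_bes Phi fs -> forall j k, (Jf Phi fs m <= j)%nat -> (Jf Phi fs m <= k)%nat ->
     Rbar_le (besnorm Phi (fsub (fs k) (fs j))) (/ (INR m + 1)).
Proof.
  intros HC. unfold Jf. apply epsilon_spec. apply HC.
  apply Rinv_0_lt_compat. pose proof (pos_INR m); lra.
Qed.

Lemma good_exists Phi fs k W lb : Folner Phi -> Cauchy_bes Phi fs -> exists N, goodN Phi fs k W lb N.
Proof.
  intros HF HC.
  assert (H : ev (goodN Phi fs k W lb)).
  { unfold goodN. apply ev_and; [exists lb; auto|]. apply ev_and; [apply folner_len; auto|].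
    apply (ev_fin1 k (fun m N => forall j, (j <= k)%nat -> (Jf Phi fs m <= j)%nat -> (Jf Phi fs m <= k)%nat ->
     bes_avg Phi (fsub (fs k) (fs j)) N < 2 * (/ (INR m + 1)) ^ 2)).
    intros m Hm. apply (ev_fin1 k (fun j N => (Jf Phi fs m <= j)%nat -> (Jf Phi fs m <= k)%nat ->
     bes_avg Phi (fsub (fs k) (fs j)) N < 2 * (/ (INR m + 1)) ^ 2)).
    intros j Hj. apply ev_imp; intros H1. apply ev_imp; intros H2.
    assert (He : 0 < / (INR m + 1)) by (apply Rinv_0_lt_compat; pose proof (pos_INR m); lra).
    destruct (normA Phi (fsub (fs k) (fs j)) (/ (INR m + 1)) ((/ (INR m + 1)) ^ 2) He (pow_lt _ 2 He)
      (Jf_spec Phi fs m HC j k H1 H2)) as [a Ha].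
    exists a; intros N HN; specialize (Ha N HN); lra. }
  destruct H as [a Ha]; exists a; apply Ha; lia.
Qed.

Lemma sig_good Phi fs k : Folner Phi -> Cauchy_bes Phi fs ->
  goodN Phi fs k (Wof Phi fs k) (lbof Phi fs k) (sig Phi fs k).
Proof.
  intros HF HC. destruct k; unfold sig, Wof, lbof; simpl; unfold chooseN;
  apply epsilon_spec; apply good_exists; auto.
Qed.

Lemma Wof_S Phi fs k : Wof Phi fs (S k) = Wof Phi fs k ++ Phi (sig Phi fs k).
Proof. destruct k; reflexivity. Qed.

Lemma Wof_In Phi fs k n : In n (Wof Phi fs k) <-> exists i, (i < k)%nat /\ In n (Phi (sig Phi fs i)).
Proof.
  induction k.
  - simpl; split; [tauto|]. intros [i [Hi _]]; lia.
  - rewrite Wof_S, in_app_iff, IHk. split.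
    + intros [[i [Hi H]]|H]; [exists i; split; auto; lia| exists k; auto].
    + intros [i [Hi H]]. destruct (Nat.eq_dec i k) as [->|Hne]; [right; auto|].
      left; exists i; split; auto; lia.
Qed.

Lemma sig_incr Phi fs : Folner Phi -> Cauchy_bes Phi fs -> strict_incr (sig Phi fs).
Proof.
  intros HF HC. assert (H : forall k, (sig Phi fs k < sig Phi fs (S k))%nat).
  { intros k. destruct (sig_good Phi fs (S k) HF HC) as [H _]. simpl in H. lia. }
  intros i j Hij. induction Hij; [apply H|]. specialize (H m); lia.
Qed.

Lemma sig_ge Phi fs : Folner Phi -> Cauchy_bes Phi fs -> forall k, (k <= sig Phi fs k)%nat.
Proof.
  intros HF HC. pose proof (sig_incr Phi fs HF HC) as H.
  induction k; [lia|]. specialize (H k (S k) (le_n _)); lia.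
Qed.

Definition hh Phi fs (n : nat) : nat :=
  epsilon (inhabits 0%nat) (fun k => In n (Phi (sig Phi fs k)) /\
     forall i, (i < k)%nat -> ~ In n (Phi (sig Phi fs i))).

Lemma least_exists (P : nat -> Prop) k : P k -> exists k0, P k0 /\ forall i, (i < k0)%nat -> ~ P i.
Proof.
  revert P. induction k as [k IH] using lt_wf_ind. intros P Hk.
  destruct (classic (exists i, (i < k)%nat /\ P i)) as [[i [Hi Pi]]|Hn].
  - apply (IH i Hi P Pi).
  - exists k; split; auto. intros i Hi Pi; apply Hn; eauto.
Qed.

Lemma hh_spec Phi fs n k : In n (Phi (sig Phi fs k)) ->
  In n (Phi (sig Phi fs (hh Phi fs n))) /\ (hh Phi fs n <= k)%nat.
Proof.
  intros H. 
  assert (Hs : In n (Phi (sig Phi fs (hh Phi fs n))) /\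
     forall i, (i < hh Phi fs n)%nat -> ~ In n (Phi (sig Phi fs i))).
  { unfold hh. apply epsilon_spec. apply (least_exists (fun k => In n (Phi (sig Phi fs k))) k H). }
  destruct Hs as [H1 H2]. split; auto.
  destruct (le_lt_dec (hh Phi fs n) k); auto. exfalso; exact (H2 k l H).
Qed.

Definition ff Phi (fs : nat -> nat -> C) (n : nat) : C := fs (hh Phi fs n) n.

Lemma Dn_nonneg fs k n : 0 <= Dn fs k n.
Proof.
  unfold Dn. apply sum_list_nonneg; intros i. apply sum_list_nonneg; intros j.
  apply pow2_ge_0.
Qed.

Lemma pointwise Phi fs j k n : (j <= k)%nat -> In n (Phi (sig Phi fs k)) ->
  Cmod (Cminus (ff Phi fs n) (fs j n)) ^ 2 <=
  Cmod (Cminus (fs k n) (fs j n)) ^ 2 + (if memb n (Wof Phi fs k) then Dn fs k n else 0).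
Proof.
  intros Hjk Hin. destruct (hh_spec Phi fs n k Hin) as [H1 H2].
  unfold ff.
  destruct (memb n (Wof Phi fs k)) eqn:E.
  - assert (Cmod (Cminus (fs (hh Phi fs n) n) (fs j n)) ^ 2 <= Dn fs k n).
    { unfold Dn.
      eapply Rle_trans; [|apply (sum_list_elem _ _ (hh Phi fs n))].
      - apply (sum_list_elem _ (fun j0 => Cmod (Cminus (fs (hh Phi fs n) n) (fs j0 n)) ^ 2)).
        + intros; apply pow2_ge_0.
        + apply in_seq; lia.
      - intros i; apply sum_list_nonneg; intros; apply pow2_ge_0.
      - apply in_seq; lia. }
    pose proof (pow2_ge_0 (Cmod (Cminus (fs k n) (fs j n)))). lra.
  - assert (hh Phi fs n = k).
    { destruct (Nat.eq_dec (hh Phi fs n) k); auto. exfalso.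
      assert (memb n (Wof Phi fs k) = true); [|congruence].
      apply memb_In, Wof_In. exists (hh Phi fs n); split; auto; lia. }
    rewrite H; lra.
Qed.

Lemma avg_bound Phi fs j k m : Folner Phi -> Cauchy_bes Phi fs ->
  (j <= k)%nat -> (m <= k)%nat -> (Jf Phi fs m <= j)%nat ->
  bes_avg (fun N => Phi (sig Phi fs N)) (fsub (ff Phi fs) (fs j)) k <=
  2 * (/ (INR m + 1)) ^ 2 + / (INR k + 1).
Proof.
  intros HF HC Hjk Hmk HJ.
  destruct (sig_good Phi fs k HF HC) as [_ [HD HR]].
  specialize (HR m Hmk j Hjk HJ ltac:(lia)).
  unfold bes_avg in *. 
  set (A := Phi (sig Phi fs k)) in *.
  assert (HA : NoDup A /\ A <> nil) by (destruct HF as [Hok _]; apply Hok).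
  destruct HA as [HND Hne].
  pose proof (len_pos A Hne) as HL. set (L := INR (length A)) in *.
  set (S1 := sum_list A (fun n => Cmod (fsub (fs k) (fs j) n) ^ 2)) in *.
  set (D := Dk fs k (Wof Phi fs k)) in *.
  assert (HS : sum_list A (fun n => Cmod (fsub (ff Phi fs) (fs j) n) ^ 2) <= S1 + D).
  { eapply Rle_trans.
    - apply sum_list_le. intros n Hn. apply (pointwise Phi fs j k n Hjk Hn).
    - rewrite sum_list_plus. unfold S1, D, Dk, fsub.
      pose proof (sum_ind A (Wof Phi fs k) (Dn fs k) HND (Dn_nonneg fs k)). lra. }
  set (S := sum_list A (fun n => Cmod (fsub (ff Phi fs) (fs j) n) ^ 2)) in *.
  assert (Hk : 0 < INR k + 1) by (pose proof (pos_INR k); lra).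
  assert (E1 : S1 = (S1 / L) * L) by (field; lra).
  assert (HD' : D <= L * / (INR k + 1)).
  { apply (Rmult_le_reg_r (INR k + 1)); auto. rewrite Rmult_assoc, Rinv_l; lra. }
  apply (Rmult_le_reg_r L); auto.
  replace (S / L * L) with S by (field; lra).
  nra.
Qed.

Lemma Cmod_sq_split (a b : C) : Cmod a ^ 2 <= 2 * Cmod (Cminus a b) ^ 2 + 2 * Cmod b ^ 2.
Proof.
  assert (E : a = (Cminus a b + b)%C) by (unfold Cminus; ring).
  pose proof (Cmod_triangle (Cminus a b) b).
  rewrite <- E in H.
  pose proof (Cmod_ge_0 a). pose proof (Cmod_ge_0 b). pose proof (Cmod_ge_0 (Cminus a b)).
  assert (Cmod a ^ 2 <= (Cmod (Cminus a b) + Cmod b) ^ 2) by (apply pow_incr; lra).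
  pose proof (pow2_ge_0 (Cmod (Cminus a b) - Cmod b)).
  nra.
Qed.

Theorem proposition3p1 (Phi : nat -> list nat) (fs : nat -> nat -> C) :
  Folner Phi ->
  (forall j : nat, L2 Phi (fs j)) ->
  Cauchy_bes Phi fs ->
  exists (sigma : nat -> nat) (f : nat -> C),
    strict_incr sigma /\
    L2 (fun N => Phi (sigma N)) f /\
    (forall eps : R, 0 < eps -> exists J : nat, forall j : nat, (J <= j)%nat ->
       Rbar_le (besnorm (fun N => Phi (sigma N)) (fsub f (fs j))) eps) /\
    (forall a b : R,
       (forall j n : nat, in_interval a b (fs j n)) ->
       forall n : nat, in_interval a b (f n)).
Proof.
  intros HF HL2 HC.
  assert (Hconv : forall eps : R, 0 < eps -> exists J : nat, forall j : nat, (J <= j)%nat ->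
       Rbar_le (besnorm (fun N => Phi (sig Phi fs N)) (fsub (ff Phi fs) (fs j))) eps).
  { intros eps Heps.
    destruct (INR_unbounded (2 / eps)) as [m Hm].
    destruct (INR_unbounded (2 / eps ^ 2)) as [K1 HK1].
    exists (Jf Phi fs m). intros j Hj.
    apply normB; [lra|]. exists (max m (max j K1)). intros k Hk.
    eapply Rle_trans; [apply (avg_bound Phi fs j k m); auto; lia|].
    assert (Hm1 : 0 < INR m + 1) by (pose proof (pos_INR m); lra).
    assert (Hk1 : INR K1 <= INR k) by (apply le_INR; lia).
    assert (Hk2 : 0 < INR k + 1) by (pose proof (pos_INR k); lra).
    assert (Ha : / (INR m + 1) <= eps / 2).
    { apply (Rmult_le_reg_r (INR m + 1)); auto. rewrite Rinv_l by lra.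
      assert (2 / eps * eps = 2) by (field; lra). nra. }
    assert (Hb : / (INR k + 1) <= eps ^ 2 / 2).
    { assert (He2 : 0 < eps ^ 2) by (apply pow_lt; lra).
      apply (Rmult_le_reg_r (INR k + 1)); auto. rewrite Rinv_l by lra.
      assert (2 / eps ^ 2 * eps ^ 2 = 2) by (field; lra). nra. }
    assert (0 <= / (INR m + 1)) by (left; apply Rinv_0_lt_compat; lra).
    assert ((/ (INR m + 1)) ^ 2 <= (eps / 2) ^ 2) by (apply pow_incr; lra).
    nra. }
  exists (sig Phi fs), (ff Phi fs). split; [apply sig_incr; auto|].
  split; [|split; auto].
  - destruct (Hconv 1 Rlt_0_1) as [J HJ].
    destruct (normA _ _ 1 1 Rlt_0_1 Rlt_0_1 (HJ J (le_n _))) as [a Ha].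
    destruct (normA' _ _ (HL2 J)) as [M [b Hb]].
    apply (normC _ _ (2 * 2 + 2 * M)). exists (max a b). intros k Hk.
    specialize (Ha k ltac:(lia)). 
    pose proof (sig_ge Phi fs HF HC k) as Hsk.
    specialize (Hb (sig Phi fs k) ltac:(lia)).
    unfold bes_avg in *.
    set (A := Phi (sig Phi fs k)) in *.
    assert (Hne : A <> nil) by (destruct HF as [Hok _]; apply Hok).
    pose proof (len_pos A Hne) as HL. set (L := INR (length A)) in *.
    assert (Hs : sum_list A (fun n => Cmod (ff Phi fs n) ^ 2) <=
       2 * sum_list A (fun n => Cmod (fsub (ff Phi fs) (fs J) n) ^ 2) +
       2 * sum_list A (fun n => Cmod (fs J n) ^ 2)).
    { rewrite <- !sum_list_scal, <- sum_list_plus. apply sum_list_le. intros n _.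
      apply Cmod_sq_split. }
    set (S0 := sum_list A (fun n => Cmod (ff Phi fs n) ^ 2)) in *.
    set (S1 := sum_list A (fun n => Cmod (fsub (ff Phi fs) (fs J) n) ^ 2)) in *.
    set (S2 := sum_list A (fun n => Cmod (fs J n) ^ 2)) in *.
    assert (E1 : S1 = S1 / L * L) by (field; lra).
    assert (E2 : S2 = S2 / L * L) by (field; lra).
    apply (Rmult_le_reg_r L); auto.
    replace (S0 / L * L) with S0 by (field; lra).
    assert (Ha' : S1 / L <= 2) by lra.
    assert (F1 : S1 / L * L <= 2 * L) by (apply Rmult_le_compat_r; lra).
    assert (F2 : S2 / L * L <= M * L) by (apply Rmult_le_compat_r; lra).
    lra.
  - intros a b Hab n. unfold ff. apply Hab.
Qed.
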